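(* Let $\mathcal X,\mathcal Y$ be complex Hilbert spaces and $A:\mathcal X\supset\operatorname{dom}A\to\mathcal Y$ a closed, densely defined linear operator such that $A^*A$ is uniformly positive, i.e. there is $c>0$ with $\|Ax\|_{\mathcal Y}\ge c\|x\|_{\mathcal X}$ for all $x\in\operatorname{dom}A$. Let $\mathcal Y_1:=\operatorname{ran}A$, regarded as a Hilbert space with the inner product of $\mathcal Y$. Let $B:\mathcal Y\supset\operatorname{dom}B\to\mathcal X$ be a closed, densely defined linear operator with $A^*\subset -B$. Define $B_{\mathcal Y_1}:\mathcal Y_1\supset\operatorname{dom}B\cap\mathcal Y_1\to\mathcal X$ by $B_{\mathcal Y_1}y=By$. Then $B_{\mathcal Y_1}$ is a closed and densely defined operator from $\mathcal Y_1$ to $\mathcal X$.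
   Context: Under the stated hypotheses $\operatorname{ran}A$ is a closed subspace of $\mathcal Y$, so $\mathcal Y_1$ is a Hilbert space. $A^*\subset -B$ means $\operatorname{dom}A^*\subset\operatorname{dom}B$ and $By=-A^*y$ for $y\in\operatorname{dom}A^*$. *)

(* Defs.v *)
From HB Require Import structures.
From mathcomp Require Import all_boot all_order all_algebra.
From mathcomp Require Import reals.
From mathcomp.real_closed Require Import complex.
Set Implicit Arguments. Unset Strict Implicit. Unset Printing Implicit Defensive.
Import Order.TTheory GRing.Theory Num.Theory.
Local Open Scope ring_scope.

Section Hilbert.
Variable R : realType.

Definition is_inner_product (V : lmodType R[i]) (ip : V -> V -> R[i]) : Prop :=
  [/\ (forall (a : R[i]) (x y z : V), ip (a *: x + y) z = a * ip x z + ip y z),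
      (forall x y : V, ip y x = (ip x y)^*),
      (forall x : V, 0 <= ip x x) &
      (forall x : V, ip x x = 0 -> x = 0)].

Definition hnorm (V : lmodType R[i]) (ip : V -> V -> R[i]) (x : V) : R :=
  Num.sqrt (complex.Re (ip x x)).

Definition hcvg (V : lmodType R[i]) (ip : V -> V -> R[i]) (u : nat -> V) (l : V) : Prop :=
  forall e : R, 0 < e -> exists N : nat, forall n : nat, (N <= n)%N ->
    hnorm ip (u n - l) < e.

Definition hcauchy (V : lmodType R[i]) (ip : V -> V -> R[i]) (u : nat -> V) : Prop :=
  forall e : R, 0 < e -> exists N : nat, forall m n : nat, (N <= m)%N -> (N <= n)%N ->
    hnorm ip (u m - u n) < e.

Definition is_hilbert (V : lmodType R[i]) (ip : V -> V -> R[i]) : Prop :=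
  is_inner_product ip /\ (forall u : nat -> V, hcauchy ip u -> exists l, hcvg ip u l).

Definition is_subspace (V : lmodType R[i]) (D : V -> Prop) : Prop :=
  D 0 /\ (forall (a : R[i]) (x y : V), D x -> D y -> D (a *: x + y)).

(* a (possibly unbounded) linear operator with domain D, acting as T on D *)
Definition is_linear_op (V W : lmodType R[i]) (D : V -> Prop) (T : V -> W) : Prop :=
  is_subspace D /\
  (forall (a : R[i]) (x y : V), D x -> D y -> T (a *: x + y) = a *: T x + T y).

Definition dense_in (V : lmodType R[i]) (ip : V -> V -> R[i]) (S D : V -> Prop) : Prop :=
  forall x : V, S x -> forall e : R, 0 < e ->
    exists y : V, [/\ D y, S y & hnorm ip (x - y) < e].

(* operator (D, T) regarded on the subspace S (inner product of V restricted
   to S) has closed graph: sequences in D /\ S converging in S whose images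
   converge *)
Definition closed_op_in (V W : lmodType R[i]) (ipV : V -> V -> R[i]) (ipW : W -> W -> R[i])
  (S D : V -> Prop) (T : V -> W) : Prop :=
  forall (u : nat -> V) (x : V) (y : W),
    (forall n, D (u n) /\ S (u n)) -> S x ->
    hcvg ipV u x -> hcvg ipW (fun n => T (u n)) y -> D x /\ T x = y.

Definition densely_defined (V : lmodType R[i]) (ip : V -> V -> R[i]) (D : V -> Prop) :=
  dense_in ip (fun _ => True) D.

Definition closed_op (V W : lmodType R[i]) (ipV : V -> V -> R[i]) (ipW : W -> W -> R[i])
  (D : V -> Prop) (T : V -> W) : Prop :=
  closed_op_in ipV ipW (fun _ => True) D T.

(* graph of the adjoint of (D, T) : y \in dom T^* and T^* y = z *)
Definition adjoint_graph (V W : lmodType R[i]) (ipV : V -> V -> R[i]) (ipW : W -> W -> R[i])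
  (D : V -> Prop) (T : V -> W) (y : W) (z : V) : Prop :=
  forall x : V, D x -> ipW (T x) y = ipV x z.

End Hilbert.

(* Main.v *)
Require Import Defs.
From HB Require Import structures.
From mathcomp Require Import all_boot all_order all_algebra.
From mathcomp Require Import reals boolp classical_sets.
From mathcomp.real_closed Require Import complex.
From mathcomp Require Import lra ring.
Import Order.TTheory GRing.Theory Num.Theory.
Local Open Scope ring_scope.
Local Open Scope complex_scope.
Set Implicit Arguments. Unset Strict Implicit.

Lemma ReJ (R : realType) (z : R[i]) : complex.Re (Num.conj z) = complex.Re z.
Proof. by case: z. Qed.

Lemma ReM_real (R : realType) (a : R) (z : R[i]) :
  complex.Re (a%:C * z) = a * complex.Re z.
Proof. by case: z => x y /=; rewrite !mul0r subr0. Qed.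

Lemma Re_mul_i (R : realType) (z : R[i]) :
  complex.Re ('i%C * z) = - complex.Im z.
Proof. by case: z => x y /=; rewrite !mul0r !mul1r sub0r. Qed.

Lemma complex_ReIm (R : realType) (z w : R[i]) :
  complex.Re z = complex.Re w -> complex.Im z = complex.Im w -> z = w.
Proof. by case: z => ? ?; case: w => ? ? /= -> ->. Qed.

Lemma ge0_complex (R : realType) (z : R[i]) : 0 <= z -> z = (complex.Re z)%:C.
Proof. by case: z => x y; rewrite lecE /= => /andP[/eqP -> _]. Qed.

Lemma ge0_Re (R : realType) (z : R[i]) : 0 <= z -> 0 <= complex.Re z.
Proof. by case: z => x y; rewrite lecE /= => /andP[_]. Qed.

Notation Rc := complex.Re.

Section IP.
Variables (R : realType) (V : lmodType R[i]) (ip : V -> V -> R[i]).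
Hypothesis hip : is_inner_product ip.

Lemma ip0l z : ip 0 z = 0.
Proof.
case: hip => L _ _ _; have := L 1 0 0 z; rewrite scale1r addr0 mul1r.
by move=> H; have := subrr (ip 0 z); rewrite {1}H addrK.
Qed.

Lemma ipDl x y z : ip (x + y) z = ip x z + ip y z.
Proof. by case: hip => L _ _ _; rewrite -[x]scale1r L mul1r scale1r. Qed.

Lemma ipZl a x z : ip (a *: x) z = a * ip x z.
Proof. by case: hip => L _ _ _; rewrite -[a *: x]addr0 L ip0l addr0. Qed.

Lemma ipNl x z : ip (- x) z = - ip x z.
Proof. by rewrite -scaleN1r ipZl mulN1r. Qed.

Lemma ipBl x y z : ip (x - y) z = ip x z - ip y z.
Proof. by rewrite ipDl ipNl. Qed.

Lemma ReC x y : Rc (ip y x) = Rc (ip x y).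
Proof. by case: hip => _ S _ _; rewrite S ReJ. Qed.

Lemma ReDr x y z : Rc (ip z (x + y)) = Rc (ip z x) + Rc (ip z y).
Proof. by rewrite ReC ipDl raddfD /= !(ReC z). Qed.

Lemma ReZl (a : R) x y : Rc (ip (a%:C *: x) y) = a * Rc (ip x y).
Proof. by rewrite ipZl ReM_real. Qed.

Lemma ReZr (a : R) x y : Rc (ip x (a%:C *: y)) = a * Rc (ip x y).
Proof. by rewrite ReC ReZl ReC. Qed.

Lemma ReNl x y : Rc (ip (- x) y) = - Rc (ip x y).
Proof. by rewrite ipNl raddfN. Qed.

Lemma ReNr x y : Rc (ip x (- y)) = - Rc (ip x y).
Proof. by rewrite ReC ReNl ReC. Qed.

Lemma ReBl x y z : Rc (ip (x - y) z) = Rc (ip x z) - Rc (ip y z).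
Proof. by rewrite ipBl raddfB. Qed.

Lemma N_ge0 x : 0 <= Rc (ip x x).
Proof. by case: hip => _ _ P _; apply: ge0_Re. Qed.

Lemma N_eq0 x : Rc (ip x x) = 0 -> x = 0.
Proof.
case: hip => _ _ P D H; apply: D; rewrite (@ge0_complex _ _ (P x)) H //.
Qed.

Lemma ND x y : Rc (ip (x + y) (x + y)) =
  Rc (ip x x) + 2 * Rc (ip x y) + Rc (ip y y).
Proof.
rewrite ipDl raddfD /= !ReDr (ReC y x); ring.
Qed.

Lemma NZ (a : R) x : Rc (ip (a%:C *: x) (a%:C *: x)) = a ^+ 2 * Rc (ip x x).
Proof. by rewrite ReZl ReZr mulrA expr2. Qed.

Lemma CS x y : Rc (ip x y) ^+ 2 <= Rc (ip x x) * Rc (ip y y).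
Proof.
have [Hy|Hy] := eqVneq (Rc (ip y y)) 0.
  rewrite (N_eq0 Hy) ReC ip0l /= expr0n /=.
  by rewrite mulr_ge0 ?N_ge0 // ip0l.
have Hy' : 0 < Rc (ip y y) by rewrite lt_def Hy N_ge0.
set t := - Rc (ip x y) / Rc (ip y y).
have H := N_ge0 (x + t%:C *: y).
rewrite ND ReZr NZ in H.
have Ht : t * Rc (ip y y) = - Rc (ip x y) by rewrite /t mulrVK // unitfE.
have := mulr_ge0 H (ltW Hy').
nra.
Qed.

Lemma hnE x : hnorm ip x = Num.sqrt (Rc (ip x x)).
Proof. by []. Qed.

Lemma hn_ge0 x : 0 <= hnorm ip x.
Proof. exact: sqrtr_ge0. Qed.

Lemma hn_sq x : hnorm ip x ^+ 2 = Rc (ip x x).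
Proof. by rewrite hnE sqr_sqrtr // N_ge0. Qed.

Lemma CSn x y : Rc (ip x y) <= hnorm ip x * hnorm ip y.
Proof.
have := CS x y; rewrite -!hn_sq -exprMn => H.
have := mulr_ge0 (hn_ge0 x) (hn_ge0 y).
move: H; set s := _ * _; set r := Rc _; nra.
Qed.

Lemma CSn' x y : - (hnorm ip x * hnorm ip y) <= Rc (ip x y).
Proof.
have := CS x y; rewrite -!hn_sq -exprMn => H.
have := mulr_ge0 (hn_ge0 x) (hn_ge0 y).
move: H; set s := _ * _; set r := Rc _; nra.
Qed.

Lemma hn_tri x y : hnorm ip (x + y) <= hnorm ip x + hnorm ip y.
Proof.
have H : hnorm ip (x + y) ^+ 2 <= (hnorm ip x + hnorm ip y) ^+ 2.
  rewrite hn_sq ND -(hn_sq x) -(hn_sq y); have := CSn x y. nra.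
have := hn_ge0 x; have := hn_ge0 y; have := hn_ge0 (x + y); nra.
Qed.

Lemma hnN x : hnorm ip (- x) = hnorm ip x.
Proof. by rewrite !hnE ReNl ReNr opprK. Qed.

Lemma hnB x y : hnorm ip (x - y) = hnorm ip (y - x).
Proof. by rewrite -hnN opprB. Qed.

Lemma hn0 : hnorm ip 0 = 0.
Proof. by rewrite hnE ip0l /= sqrtr0. Qed.

Lemma hn_eq0 x : hnorm ip x = 0 -> x = 0.
Proof.
move=> H; apply: N_eq0; rewrite -hn_sq H; by rewrite expr0n.
Qed.

Lemma cvg_cauchy u l : hcvg ip u l -> hcauchy ip u.
Proof.
move=> H e e0; have [N HN] := H (e / 2) (divr_gt0 e0 (ltr0Sn _ 1)).
exists N => m n Hm Hn.
have -> : u m - u n = (u m - l) + (l - u n) by rewrite addrA subrK.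
apply: (le_lt_trans (hn_tri _ _)); rewrite (hnB l).
have := HN m Hm; have := HN n Hn; lra.
Qed.

End IP.
Lemma eps_gt0 (R : realType) (n : nat) : 0 < (n.+1%:R : R)^-1.
Proof. by rewrite invr_gt0 ltr0Sn. Qed.

Lemma small_inv (R : realType) (e : R) : 0 < e ->
  exists N : nat, forall n, (N <= n)%N -> (n.+1%:R : R)^-1 < e.
Proof.
move=> e0; have e'0 : 0 < e^-1 by rewrite invr_gt0.
have Hb := archi_boundP (ltW e'0).
exists (Num.Def.archi_bound e^-1) => n Hn.
rewrite -[e]invrK ltf_pV2 ?posrE ?ltr0Sn ?invr_gt0 //.
apply: (lt_le_trans Hb); rewrite ler_nat; exact: leqW.
Qed.

Lemma alpha_ge0 (R : realType) (al N : R) : 0 <= N ->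
  (forall t, 0 <= t -> 0 <= 2 * t * al + t ^+ 2 * N) -> 0 <= al.
Proof.
move=> N0 H; case: (lerP 0 al) => // Hal.
have N1 : 0 < N + 1 by lra.
set t := - al / (N + 1).
have Ht : t * (N + 1) = - al by rewrite /t mulrVK // unitfE gt_eqF.
have t0 : 0 < t by rewrite /t divr_gt0 // oppr_gt0.
have := H t (ltW t0). clearbody t.
have Ht2 : t * (t * (N + 1)) = t * (- al) by rewrite Ht.
have al0 : 0 < - al by rewrite oppr_gt0.
have := mulr_gt0 t0 al0. have := mulr_gt0 t0 t0.
move: Ht2; rewrite expr2; lra.
Qed.

Section Riesz.
Variables (R : realType) (V : lmodType R[i]) (ip : V -> V -> R[i]).
Hypothesis hH : is_hilbert ip.
Variable K : V -> Prop.
Hypothesis hK : is_subspace K.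
Variable psi : V -> R.
Hypothesis hpsi : forall (a : R) x y, K x -> K y ->
  psi (a%:C *: x + y) = a * psi x + psi y.
Variable M : R.
Hypothesis hbd : forall k, K k -> psi k <= M * hnorm ip k.

Lemma riesz_min : exists p (u : nat -> V), (forall n, K (u n)) /\
  hcvg ip u p /\ forall k, K k -> Rc (ip k p) = psi k.
Proof.
have hip := hH.1.
case: hK => K0 KL.
have KZ a x : K x -> K (a *: x) by move=> Kx; have := KL a x 0 Kx K0; rewrite addr0.
have KD x y : K x -> K y -> K (x + y).
  by move=> Kx Ky; have := KL 1 x y Kx Ky; rewrite scale1r.
have psi0 : psi 0 = 0.
  have := hpsi 1 K0 K0; rewrite scaler0 addr0 mul1r => H.
  by have := subrr (psi 0); rewrite {1}H addrK.
have psiZ a x : K x -> psi (a%:C *: x) = a * psi x.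
  by move=> Kx; have := hpsi a Kx K0; rewrite !addr0 psi0 addr0.
have psiD x y : K x -> K y -> psi (x + y) = psi x + psi y.
  by move=> Kx Ky; have := hpsi 1 Kx Ky; rewrite mul1r scale1r.
pose Q k := Rc (ip k k) - 2 * psi k.
pose E := fun t => exists2 k, K k & Q k = t.
have hinf : has_inf E.
  split; first by exists (Q 0); exists 0.
  exists (- M ^+ 2) => t [k Kk <-]; rewrite /Q.
  have := hbd Kk; rewrite -hn_sq //; have := hn_ge0 ip k; move=> H1 H2. change (- M ^+ 2 <= hnorm ip k ^+ 2 - 2 * psi k)%R. have := sqr_ge0 (hnorm ip k - M). nra.
have Hlb k : K k -> inf E <= Q k.
  by move=> Kk; apply: (ge_inf hinf.2); exists k.
have Hmin n : exists k, K k /\ Q k < inf E + (n.+1%:R)^-1.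
  have [t [k Kk <-] Ht] := inf_adherent (eps_gt0 R n) hinf.
  by exists k.
case: (choice Hmin) => u Hu.
have Kmid a b : K a -> K b -> K ((2^-1 : R)%:C *: (a + b)).
  by move=> Ka Kb; apply: KZ; apply: KD.
have Hpar a b : K a -> K b -> Rc (ip (a - b) (a - b)) =
    2 * Q a + 2 * Q b - 4 * Q ((2^-1 : R)%:C *: (a + b)).
  move=> Ka Kb; rewrite /Q NZ // psiZ; last exact: KD.
  rewrite psiD // !ND // !ReNr // !ReNl // opprK.
  by field.
have Hcauchy : hcauchy ip u.
  move=> e e0.
  have e2 : 0 < e ^+ 2 / 4 by rewrite divr_gt0 // exprn_gt0.
  have [N HN] := small_inv e2.
  exists N => m n Hm Hn.
  have := HN m Hm; have := HN n Hn.
  have := Hpar (u m) (u n) (Hu m).1 (Hu n).1.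
  have := Hlb _ (Kmid _ _ (Hu m).1 (Hu n).1).
  have := (Hu m).2; have := (Hu n).2.
  rewrite -hn_sq //; have := hn_ge0 ip (u m - u n).
  move: (hnorm ip _) => h; move: (Q _) => q; move: (Q (u m)) (Q (u n)) => qm qn.
  move: (_^-1) (_^-1) => en em. 
  nra.
have [p Hp] := hH.2 u Hcauchy.
exists p, u; split; first by move=> n; exact: (Hu n).1.
split=> //.
have EL k : K k -> forall t, 0 <= t ->
    0 <= 2 * t * (Rc (ip k p) - psi k) + t ^+ 2 * Rc (ip k k).
  move=> Kk.
  have StepA t n : - (n.+1%:R)^-1 <
      2 * t * (Rc (ip k (u n)) - psi k) + t ^+ 2 * Rc (ip k k).
    have K1 : K (t%:C *: k + u n) := KL _ _ _ Kk (Hu n).1.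
    have := Hlb _ K1; have := (Hu n).2.
    rewrite /Q hpsi //; last exact: (Hu n).1.
    rewrite (addrC (t%:C *: k)) ND // NZ // ReZr // (ReC hip k (u n)).
    move: (inf E) (n.+1%:R^-1) => m eps; lra.
  move=> t t0.
  set X := _ + _; case: (lerP 0 X) => // HX; exfalso.
  set eta := - X.
  have eta0 : 0 < eta by rewrite /eta oppr_gt0.
  set hk := hnorm ip k.
  have hk0 : 0 <= hk := hn_ge0 ip k.
  have thk0 : 0 < t * hk + 1 by have := mulr_ge0 t0 hk0; lra.
  set e' := eta / (4 * (t * hk + 1)).
  have e'0 : 0 < e' by rewrite /e' divr_gt0 // mulr_gt0.
  have He' : (t * hk + 1) * e' * 4 = eta.
    rewrite /e'; field; lra.
  have [N1 HN1] := Hp e' e'0.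
  have eta2 : 0 < eta / 2 by rewrite divr_gt0.
  have [N2 HN2] := small_inv eta2.
  pose n := maxn N1 N2.
  have h1 := HN1 n (leq_maxl _ _). have h2 := HN2 n (leq_maxr _ _).
  have hA := StepA t n.
  have hd : Rc (ip k (u n)) = Rc (ip k p) + Rc (ip k (u n - p)).
    rewrite (ReC hip (u n - p) k) ReBl // (ReC hip k (u n)) (ReC hip k p).
    ring.
  have hcs := CSn hip k (u n - p).
  have hh0 := hn_ge0 ip (u n - p).
  have P1 : t * (hk * hnorm ip (u n - p)) <= t * (hk * e').
    by apply: ler_wpM2l => //; apply: ler_wpM2l => //; apply: ltW.
  have P2 : t * Rc (ip k (u n - p)) <= t * (hk * hnorm ip (u n - p)).
    by apply: ler_wpM2l.
  move: hA P1 P2 He' h2; rewrite hd.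
  move: (Rc (ip k (u n - p))) (hnorm ip (u n - p)) => d h.
  rewrite /eta /X in eta2 *.
  move: (n.+1%:R^-1) => eps. clearbody e'.
  lra.
move=> k Kk.
have Kn : K (- k) by rewrite -scaleN1r; apply: KZ.
have A1 := alpha_ge0 (N_ge0 hip k) (EL k Kk).
have A2 := alpha_ge0 (N_ge0 hip (- k)) (EL (- k) Kn).
have Ek : - k = (-1 : R)%:C *: k by rewrite rmorphN1 scaleN1r.
move: A2; rewrite ReNl // Ek psiZ //.
lra.
Qed.
End Riesz.

Section Main.
Variables (R : realType) (X Y : lmodType R[i]).
Variables (ipX : X -> X -> R[i]) (ipY : Y -> Y -> R[i]).
Hypotheses (hX : is_hilbert ipX) (hY : is_hilbert ipY).
Variables (DA : X -> Prop) (A : X -> Y).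
Hypotheses (linA : is_linear_op DA A) (closedA : closed_op ipX ipY DA A).
Variable c : R.
Hypothesis c0 : 0 < c.
Hypothesis hA : forall x, DA x -> c * hnorm ipX x <= hnorm ipY (A x).
Variables (DB : Y -> Prop) (B : Y -> X).
Hypothesis linB : is_linear_op DB B.
Hypothesis AstarB : forall (y : Y) (z : X), adjoint_graph ipX ipY DA A y z ->
     DB y /\ B y = - z.

Local Notation Y1 := (fun y => exists2 x, DA x & A x = y).

Lemma DA0 : DA 0.
Proof. by case: linA => -[]. Qed.

Lemma DAL a x y : DA x -> DA y -> DA (a *: x + y).
Proof. by case: linA => -[_ H] _; apply: H. Qed.

Lemma Alin a x y : DA x -> DA y -> A (a *: x + y) = a *: A x + A y.
Proof. by case: linA => _ H; apply: H. Qed.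

Lemma A0 : A 0 = 0.
Proof.
have := Alin 1 DA0 DA0; rewrite !scale1r addr0 => H.
by have := subrr (A 0); rewrite {1}H addrK.
Qed.

Lemma DAB x y : DA x -> DA y -> DA (x - y).
Proof. by move=> Dx Dy; have := DAL (-1) Dy Dx; rewrite scaleN1r addrC. Qed.

Lemma AB x y : DA x -> DA y -> A (x - y) = A x - A y.
Proof. by move=> Dx Dy; have := Alin (-1) Dy Dx; rewrite !scaleN1r addrC [- _ + _]addrC. Qed.

Lemma Ainj u v : DA u -> DA v -> A u = A v -> u = v.
Proof.
move=> Du Dv Huv; apply/eqP; rewrite -subr_eq0; apply/eqP.
have Dw := DAB Du Dv.
have := hA Dw; rewrite AB // Huv subrr (hn0 hY.1) => H.
apply: (hn_eq0 hX.1).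
have := hn_ge0 ipX (u - v); have := mulr_ge0 (ltW c0) (hn_ge0 ipX (u - v)).
move: H; move: (hnorm ipX (u - v)) => h H1 H2 H3.
apply/eqP; rewrite eq_le H3 andbT.
by rewrite -(pmulr_rle0 _ c0).
Qed.

Lemma Y1sub : is_subspace Y1.
Proof.
split; first by exists 0; rewrite ?A0 //; exact: DA0.
move=> a _ _ [x Dx <-] [y Dy <-]; exists (a *: x + y); first exact: DAL.
exact: Alin.
Qed.

Lemma Y1closed u y : (forall n, Y1 (u n)) -> hcvg ipY u y -> Y1 y.
Proof.
move=> Hu Hcv.
have H n : exists x, DA x /\ A x = u n by case: (Hu n) => x ? ?; exists x.
case: (choice H) => xs Hxs.
have Hc : hcauchy ipX xs.
  move=> e e0; have [N HN] := cvg_cauchy hY.1 Hcv (mulr_gt0 e0 c0).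
  exists N => m n Hm Hn.
  have := hA (DAB (Hxs m).1 (Hxs n).1).
  rewrite AB; [|exact: (Hxs m).1|exact: (Hxs n).1].
  rewrite (Hxs m).2 (Hxs n).2 => H1; have H2 := HN m n Hm Hn.
  have := lt_le_trans (le_lt_trans H1 H2) (lexx _).
  by rewrite [e * c]mulrC ltr_pM2l.
have [x Hx] := hX.2 xs Hc.
have Hcy : hcvg ipY (fun n => A (xs n)) y.
  move=> e e0; case: (Hcv e e0) => N HN; exists N => n Hn.
  by rewrite (Hxs n).2; exact: HN.
have [Dx Ax] := closedA (fun n => conj (Hxs n).1 I) I Hx Hcy.
by exists x.
Qed.

Lemma riesz_A f : exists z, [/\ Y1 z, DB z &
  forall x, DA x -> ipY (A x) z = ipX x f].
Proof.
have gex y : exists x, Y1 y -> DA x /\ A x = y.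
  case: (pselect (Y1 y)) => [[x Dx Ax]|nY]; first by exists x.
  by exists 0.
case: (choice gex) => g Hg.
pose psi y := Rc (ipX (g y) f).
have hpsi a y1 y2 : Y1 y1 -> Y1 y2 ->
    psi (a%:C *: y1 + y2) = a * psi y1 + psi y2.
  move=> H1 H2.
  have H3 : Y1 (a%:C *: y1 + y2) by apply: Y1sub.2.
  rewrite /psi.
  have -> : g (a%:C *: y1 + y2) = a%:C *: g y1 + g y2.
    apply: Ainj; first by case: (Hg _ H3).
      by apply: DAL; [case: (Hg _ H1)|case: (Hg _ H2)].
    rewrite (Hg _ H3).2 Alin; first by rewrite (Hg _ H1).2 (Hg _ H2).2.
      by case: (Hg _ H1).
    by case: (Hg _ H2).
  by rewrite (ipDl hX.1) raddfD /= (ReZl hX.1).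
have hbd y : Y1 y -> psi y <= (hnorm ipX f / c) * hnorm ipY y.
  move=> Hy; have [Dgy Agy] := Hg _ Hy.
  have := hA Dgy; rewrite Agy => H1.
  have := CSn hX.1 (g y) f; rewrite -/(psi y) => H2.
  apply: (le_trans H2).
  have F0 := hn_ge0 ipX f; have Fc : 0 <= hnorm ipX f / c by rewrite divr_ge0 // ltW.
  have E1 : hnorm ipX f / c * (c * hnorm ipX (g y)) = hnorm ipX (g y) * hnorm ipX f.
    by field; rewrite gt_eqF.
  rewrite -E1; exact: ler_wpM2l.
have [p [u [Hu [Hcv Hk]]]] := riesz_min hY Y1sub hpsi hbd.
have Yp : Y1 p := Y1closed Hu Hcv.
have HRe x : DA x -> Rc (ipY (A x) p) = Rc (ipX x f).
  move=> Dx; have Y1x : Y1 (A x) by exists x.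
  rewrite Hk // /psi; congr (Rc (ipX _ f)).
  apply: Ainj => //; first by case: (Hg _ Y1x).
  by case: (Hg _ Y1x).
have Hz x : DA x -> ipY (A x) p = ipX x f.
  move=> Dx; apply: complex_ReIm; first exact: HRe.
  have Dix : DA ('i%C *: x) by rewrite -[_ *: x]addr0; apply: DAL => //; exact: DA0.
  have := HRe _ Dix.
  have -> : A ('i%C *: x) = 'i%C *: A x.
    by rewrite -[_ *: x]addr0 Alin ?A0 ?addr0 //; exact: DA0.
  rewrite (ipZl hX.1) (ipZl hY.1) !Re_mul_i => /eqP; rewrite eqr_opp => /eqP //.
exists p; split => //.
by case: (AstarB Hz).
Qed.

Lemma Y1_dense : dense_in ipY Y1 DB.
Proof.
move=> y0 Hy0 e e0.
pose D := fun y => Y1 y /\ DB y.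
have hD : is_subspace D.
  case: linB => -[DB0 DBL] _.
  split; first by split => //; exact: Y1sub.1.
  move=> a x y [Y1x DBx] [Y1y DBy]; split; first exact: Y1sub.2.
  exact: DBL.
pose psi v := Rc (ipY v y0).
have hpsi a x y : D x -> D y -> psi (a%:C *: x + y) = a * psi x + psi y.
  by move=> _ _; rewrite /psi (ipDl hY.1) raddfD /= (ReZl hY.1).
have hbd k : D k -> psi k <= hnorm ipY y0 * hnorm ipY k.
  by move=> _; rewrite mulrC; exact: CSn hY.1 k y0.
have [p [u [Hu [Hcv Hk]]]] := riesz_min hY hD hpsi hbd.
have Yp : Y1 p := Y1closed (fun n => (Hu n).1) Hcv.
case: Hy0 => x0 Dx0 Ax0; case: Yp => xp Dxp Axp.
have Dx1 := DAB Dx0 Dxp.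
have [z [Yz DBz Hz]] := riesz_A (x0 - xp).
have H1 := Hk z (conj Yz DBz); rewrite /psi in H1.
have H2 := Hz _ Dx1; rewrite AB // Ax0 Axp in H2.
have H3 : Rc (ipX (x0 - xp) (x0 - xp)) = 0.
  rewrite -H2 (ReBl hY.1) (ReC hY.1 z y0) (ReC hY.1 z p) H1 subrr //.
have H4 := N_eq0 hX.1 H3.
have Ey : y0 = p.
  by rewrite -Ax0 -Axp; congr (A _); apply/eqP; rewrite -subr_eq0 H4.
case: (Hcv e e0) => N HN.
exists (u N); split; [exact: (Hu N).2 | exact: (Hu N).1 |].
by rewrite Ey (hnB hY.1); exact: HN.
Qed.

End Main.

Unset Implicit Arguments.
Local Close Scope complex_scope.
Set Strict Implicit.

Theorem lemma3p1 (R : realType) (X Y : lmodType R[i])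
  (ipX : X -> X -> R[i]) (ipY : Y -> Y -> R[i])
  (hX : is_hilbert ipX) (hY : is_hilbert ipY)
  (DA : X -> Prop) (A : X -> Y)
  (linA : is_linear_op DA A) (closedA : closed_op ipX ipY DA A)
  (denseA : densely_defined ipX DA)
  (posA : exists c : R, 0 < c /\
     forall x : X, DA x -> c * hnorm ipX x <= hnorm ipY (A x))
  (DB : Y -> Prop) (B : Y -> X)
  (linB : is_linear_op DB B) (closedB : closed_op ipY ipX DB B)
  (denseB : densely_defined ipY DB)
  (AstarB : forall (y : Y) (z : X), adjoint_graph ipX ipY DA A y z ->
     DB y /\ B y = - z) :
  let Y1 : Y -> Prop := fun y => exists2 x, DA x & A x = y in
  closed_op_in ipY ipX Y1 DB B /\ dense_in ipY Y1 DB.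
Proof.
move=> Y1; case: posA => c [c0 hA]; split.
  move=> u x y Hu Sx Hcu Hcb.
  exact: (closedB u x y (fun n => conj (Hu n).1 I) I Hcu Hcb).
rewrite /Y1.
exact: (Y1_dense hX hY linA closedA c0 hA linB AstarB).
Qed.
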